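(* Let $r\ge4$. Every quasi product of $U_{2,3}$ and $M(r)$ has rank at most $2r-1$. In particular, no tensor product of $U_{2,3}$ and $M(r)$ exists.
   Context: Quasi product of matroids $M,N$: a matroid $P$ on $E(M)\times E(N)$ such that for every non-loop $e\in E(M)$, $x\mapsto(e,x)$ is an isomorphism $N\cong P|_{\{e\}\times E(N)}$; for every non-loop $f\in E(N)$, $x\mapsto(x,f)$ is an isomorphism $M\cong P|_{E(M)\times\{f\}}$; and rows/columns indexed by loops have rank $0$. A tensor product is a quasi product of rank $\mathrm{rk}(M)\mathrm{rk}(N)$. $U_{2,3}$ is the uniform matroid of rank $2$ on $3$ elements. Lindström matroid $M(r)$, $r\ge4$: let $A,B,C,D$ be pairwise disjoint sets of size $r-2$, $E_r=A\cup B\cup C\cup D$, $\mathcal{H}=\{A\cup B,A\cup C,A\cup D,B\cup C,B\cup D\}$; $M(r)$ is the rank-$r$ matroid on $E_r$ with $\mathrm{rk}(X)=\min(|X|,r-1)$ if $X\subseteq H$ for some $H\in\mathcal{H}$ and $\mathrm{rk}(X)=\min(|X|,r)$ otherwise (its proper nonempty cyclic flats are exactly the sets in $\mathcal{H}$, all hyperplanes). $M(4)$ is the Vámos matroid. *)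

(* Defs.v *)
From mathcomp Require Import all_boot.
Set Implicit Arguments. Unset Strict Implicit. Unset Printing Implicit Defensive.

Definition is_matroid (T : finType) (rk : {set T} -> nat) : Prop :=
  [/\ forall X : {set T}, rk X <= #|X|,
      forall X Y : {set T}, X \subset Y -> rk X <= rk Y &
      forall X Y : {set T}, rk (X :|: Y) + rk (X :&: Y) <= rk X + rk Y].

Definition is_loop (T : finType) (rk : {set T} -> nat) (e : T) : bool :=
  rk [set e] == 0.

Definition quasi_product (S T : finType) (rkM : {set S} -> nat)
  (rkN : {set T} -> nat) (rkP : {set S * T} -> nat) : Prop :=
  [/\ is_matroid rkP,
      (* for every non-loop e of M, x |-> (e,x) is an isomorphism N ~ P|{e} x E(N) *)
      forall e : S, ~~ is_loop rkM e ->
        forall X : {set T}, rkP [set (e, x) | x in X] = rkN X,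
      (* for every non-loop f of N, x |-> (x,f) is an isomorphism M ~ P|E(M) x {f} *)
      forall f : T, ~~ is_loop rkN f ->
        forall X : {set S}, rkP [set (x, f) | x in X] = rkM X,
      forall e : S, is_loop rkM e -> rkP [set (e, x) | x : T] = 0 &
      forall f : T, is_loop rkN f -> rkP [set (x, f) | x : S] = 0].

Definition tensor_product (S T : finType) (rkM : {set S} -> nat)
  (rkN : {set T} -> nat) (rkP : {set S * T} -> nat) : Prop :=
  quasi_product rkM rkN rkP /\ rkP setT = rkM setT * rkN setT.

Definition U23_rank (X : {set 'I_3}) : nat := minn #|X| 2.

(* Lindstrom matroid M(r): ground set E_r = 'I_4 * 'I_(r-2); block i of the
   ground set is [set (i, j) | j], with blocks 0,1,2,3 = A,B,C,D. *)
Definition lind_ground (r : nat) := ('I_4 * 'I_(r - 2))%type.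

Definition lind_block (r : nat) (i : 'I_4) : {set lind_ground r} :=
  [set x | x.1 == i].

(* The five hyperplanes A∪B, A∪C, A∪D, B∪C, B∪D: unions of blocks i, j with
   i < j and i <= 1. *)
Definition lind_hyperplanes (r : nat) : {set {set lind_ground r}} :=
  [set lind_block r ij.1 :|: lind_block r ij.2
     | ij in [set ij : 'I_4 * 'I_4 | (ij.1 < ij.2) && (ij.1 <= 1)]].

Definition lind_rank (r : nat) (X : {set lind_ground r}) : nat :=
  if [exists H in lind_hyperplanes r, X \subset H]
  then minn #|X| r.-1 else minn #|X| r.

(* Main.v *)
Require Import Defs.
From mathcomp Require Import all_boot zify.
Set Implicit Arguments. Unset Strict Implicit. Unset Printing Implicit Defensive.

Section Mat.
Variable T : finType.
Variable rk : {set T} -> nat.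
Hypothesis Hm : is_matroid rk.

Lemma rk_mono (X Y : {set T}) : X \subset Y -> rk X <= rk Y.
Proof. by case: Hm => _ H _; apply: H. Qed.

Lemma rk_sub' (A B C : {set T}) : C \subset A -> C \subset B ->
  rk (A :|: B) + rk C <= rk A + rk B.
Proof.
move=> hA hB; case: Hm => _ _ H; have := H A B.
have := @rk_mono C (A :&: B); rewrite subsetI hA hB => /(_ isT). lia.
Qed.

Lemma rk_U (A B : {set T}) : rk (A :|: B) <= rk A + rk B.
Proof. have := @rk_sub' A B set0; rewrite !sub0set => /(_ isT isT); lia. Qed.

Lemma rk_add1 (S T0 : {set T}) y : T0 \subset S -> rk (y |: T0) <= rk T0 ->
  rk (y |: S) <= rk S.
Proof.
move=> hS h; have := @rk_sub' S (y |: T0) T0 hS (subsetUr _ _).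
have := @rk_mono (y |: S) (S :|: (y |: T0)).
rewrite setUCA setUS ?subsetUl // => /(_ isT). lia.
Qed.

Lemma rk_fill (S Y : {set T}) : (forall y, y \in Y -> rk (y |: S) <= rk S) ->
  rk (S :|: Y) <= rk S.
Proof.
rewrite -(set_enum Y); elim: (enum Y) => [|a s IH] h.
  have -> : [set x | x \in [::]] = set0 :> {set T} by apply/setP=> x; rewrite !inE.
  by rewrite setU0.
have -> : [set x | x \in a :: s] = a |: [set x | x \in s].
  by apply/setP=> x; rewrite !inE.
have IH' : rk (S :|: [set x | x \in s]) <= rk S.
  by apply: IH => y hy; apply: h; move: hy; rewrite !inE => ->; rewrite orbT.
have ha : rk (a |: S) <= rk S by apply: h; rewrite !inE eqxx.
have := @rk_sub' (S :|: [set x | x \in s]) (a |: S) S (subsetUl _ _) (subsetUr _ _).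
have -> : (S :|: [set x | x \in s]) :|: (a |: S) = S :|: (a |: [set x | x \in s]).
  by apply/setP=> x; rewrite !inE; case: (x \in S); case: (x == a); case: (x \in s).
have : rk S <= rk (S :|: [set x | x \in s]) by apply: rk_mono; apply: subsetUl.
lia.
Qed.
End Mat.

Definition k0 : 'I_4 := @Ordinal 4 0 isT.
Definition k1 : 'I_4 := @Ordinal 4 1 isT.
Definition k2 : 'I_4 := @Ordinal 4 2 isT.
Definition k3 : 'I_4 := @Ordinal 4 3 isT.

Section L.
Variable r : nat.
Hypothesis hr : 4 <= r.
Local Notation G := (lind_ground r).
Local Notation lr := (lind_rank (r := r)).
Local Notation bl := (lind_block r).

Lemma lr_ge (X : {set G}) : minn #|X| r.-1 <= lr X.
Proof. rewrite /lind_rank; case: ifP => _; lia. Qed.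

Lemma bl_X i : bl i = setX [set i] setT.
Proof. by apply/setP => -[x y]; rewrite !inE andbT. Qed.

Lemma card_bl i : #|bl i| = r - 2.
Proof. by rewrite bl_X cardsX cards1 cardsT card_ord mul1n. Qed.

Lemma card_bl2 (i j : 'I_4) : i != j -> #|bl i :|: bl j| = 2 * (r - 2).
Proof.
move=> hij; rewrite cardsU !card_bl.
have -> : bl i :&: bl j = set0.
  apply/setP => -[x y]; rewrite !inE /=; apply/negP => /andP[/eqP e1 /eqP e2].
  by move: hij; rewrite -e1 -e2 eqxx.
rewrite cards0; lia.
Qed.

Lemma lr_hyp (X : {set G}) (i j : 'I_4) : i < j -> i <= 1 ->
  X \subset bl i :|: bl j -> lr X <= r.-1.
Proof.
move=> hij hi hX; rewrite /lind_rank.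
have -> : [exists H in lind_hyperplanes r, X \subset H].
  apply/existsP; exists (bl i :|: bl j); rewrite hX andbT.
  by apply/imsetP; exists (i, j) => //; rewrite inE hij hi.
lia.
Qed.

Lemma lr_nohyp (X : {set G}) :
  (forall i j : 'I_4, i < j -> i <= 1 -> X \subset bl i :|: bl j -> False) ->
  r <= #|X| -> r <= lr X.
Proof.
move=> h hc; rewrite /lind_rank.
case: ifP => [/existsP [H /andP [/imsetP [[i j] /= hij ->] hX]]|_]; last by lia.
by move: hij; rewrite inE => /andP [h1 h2]; case: (h i j h1 h2 hX).
Qed.

Definition z0 : 'I_(r - 2) := Ordinal (ltac:(lia) : 0 < r - 2).

Lemma memU (k i j : 'I_4) (X : {set G}) : (k, z0) \in X -> X \subset bl i :|: bl j ->
  (nat_of_ord k = i) \/ (nat_of_ord k = j).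
Proof.
move=> hk /subsetP /(_ _ hk); rewrite !inE /= => /orP [] /eqP ->; by [left|right].
Qed.

Local Notation a := (bl k0).
Local Notation b := (bl k1).
Local Notation c := (bl k2).
Local Notation d := (bl k3).

Lemma lr_a : r - 2 <= lr a.
Proof. apply: leq_trans (lr_ge _); rewrite card_bl; lia. Qed.
Lemma lr_b : r - 2 <= lr b.
Proof. apply: leq_trans (lr_ge _); rewrite card_bl; lia. Qed.
Lemma lr_h : r - 1 <= lr (a :|: b).
Proof. apply: leq_trans (lr_ge _); rewrite card_bl2 //; lia. Qed.

Lemma lr_ac : lr (a :|: c) <= r - 1.
Proof. have := @lr_hyp (a :|: c) k0 k2 isT isT (subxx _); lia. Qed.
Lemma lr_ad : lr (a :|: d) <= r - 1.
Proof. have := @lr_hyp (a :|: d) k0 k3 isT isT (subxx _); lia. Qed.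
Lemma lr_bc : lr (b :|: c) <= r - 1.
Proof. have := @lr_hyp (b :|: c) k1 k2 isT isT (subxx _); lia. Qed.
Lemma lr_bd : lr (b :|: d) <= r - 1.
Proof. have := @lr_hyp (b :|: d) k1 k3 isT isT (subxx _); lia. Qed.
Lemma lr_ab : lr (a :|: b) <= r - 1.
Proof. have := @lr_hyp (a :|: b) k0 k1 isT isT (subxx _); lia. Qed.

Lemma card_ge (X : {set G}) (i j : 'I_4) : i != j -> bl i :|: bl j \subset X -> r <= #|X|.
Proof. move=> hij hX; have := subset_leq_card hX; rewrite card_bl2 //; lia. Qed.

Lemma lr_ch : r <= lr (c :|: (a :|: b)).
Proof.
apply: lr_nohyp; last by apply: (@card_ge _ k0 k2) => //; apply/subsetP => x; rewrite !inE => /orP [] ->; rewrite ?orbT.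
set X0 : {set G} := c :|: (a :|: b).
move=> i j hij hi hX.
have := memU (k := k0) (X := X0) (ltac:(by rewrite !inE)) hX.
have := memU (k := k1) (X := X0) (ltac:(by rewrite !inE)) hX.
have := memU (k := k2) (X := X0) (ltac:(by rewrite !inE)) hX.
rewrite /=; lia.
Qed.

Lemma lr_adbd : r <= lr ((a :|: d) :|: (b :|: d)).
Proof.
apply: lr_nohyp; last by apply: (@card_ge _ k0 k3) => //; apply/subsetP => x; rewrite !inE => /orP [] ->; rewrite ?orbT.
set X0 : {set G} := (a :|: d) :|: (b :|: d).
move=> i j hij hi hX.
have := memU (k := k0) (X := X0) (ltac:(by rewrite !inE)) hX.
have := memU (k := k1) (X := X0) (ltac:(by rewrite !inE)) hX.
have := memU (k := k3) (X := X0) (ltac:(by rewrite !inE)) hX.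
rewrite /=; lia.
Qed.

Lemma lr_cd : r <= lr (c :|: d).
Proof.
apply: lr_nohyp; last by apply: (@card_ge _ k2 k3).
set X0 : {set G} := c :|: d.
move=> i j hij hi hX.
have := memU (k := k2) (X := X0) (ltac:(by rewrite !inE)) hX.
have := memU (k := k3) (X := X0) (ltac:(by rewrite !inE)) hX.
rewrite /=; lia.
Qed.

Lemma lr_T : r <= lr setT.
Proof.
apply: lr_nohyp; last by apply: (@card_ge _ k0 k1) => //; apply: subsetT.
set X0 : {set G} := setT.
move=> i j hij hi hX.
have := memU (k := k0) (X := X0) (ltac:(by rewrite !inE)) hX.
have := memU (k := k1) (X := X0) (ltac:(by rewrite !inE)) hX.
have := memU (k := k2) (X := X0) (ltac:(by rewrite !inE)) hX.
rewrite /=; lia.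
Qed.
End L.

Definition j0 : 'I_3 := @Ordinal 3 0 isT.
Definition j1 : 'I_3 := @Ordinal 3 1 isT.
Definition j2 : 'I_3 := @Ordinal 3 2 isT.

Section Q.
Variable r : nat.
Hypothesis hr : 4 <= r.
Local Notation G := (lind_ground r).
Local Notation lr := (lind_rank (r := r)).
Variable rk : {set 'I_3 * G} -> nat.
Hypothesis Hq : quasi_product U23_rank lr rk.

Lemma Hm : is_matroid rk. Proof. by case: Hq. Qed.

Definition row (i : 'I_3) (X : {set G}) : {set 'I_3 * G} := [set (i, x) | x in X].
Definition M (X0 X1 X2 : {set G}) := row j0 X0 :|: row j1 X1 :|: row j2 X2.

Lemma lr_le_r (X : {set G}) : lr X <= r.
Proof. rewrite /lind_rank; case: ifP => _; lia. Qed.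


Lemma rowrk i (X : {set G}) : rk (row i X) = lr X.
Proof.
case: Hq => _ H _ _ _; apply: H; rewrite /is_loop /U23_rank cards1.
by [].
Qed.

Lemma MU (X0 X1 X2 Y0 Y1 Y2 : {set G}) :
  M X0 X1 X2 :|: M Y0 Y1 Y2 = M (X0 :|: Y0) (X1 :|: Y1) (X2 :|: Y2).
Proof. by rewrite /M /row !imsetU setUACA [X in X :|: _]setUACA. Qed.

Lemma MS (X0 X1 X2 Y0 Y1 Y2 : {set G}) : X0 \subset Y0 -> X1 \subset Y1 -> X2 \subset Y2 ->
  M X0 X1 X2 \subset M Y0 Y1 Y2.
Proof. by move=> h0 h1 h2; rewrite /M /row !setUSS // imsetS. Qed.

Lemma M0rk (X : {set G}) : rk (M X set0 set0) = lr X.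
Proof. by rewrite /M /row !imset0 !setU0 rowrk. Qed.
Lemma M1rk (X : {set G}) : rk (M set0 X set0) = lr X.
Proof. by rewrite /M /row !imset0 setU0 set0U rowrk. Qed.
Lemma M2rk (X : {set G}) : rk (M set0 set0 X) = lr X.
Proof. by rewrite /M /row !imset0 !set0U rowrk. Qed.

Lemma col i j k f : i != j -> rk ((k, f) |: [set (i, f); (j, f)]) <= rk [set (i, f); (j, f)].
Proof.
move=> hij; case: Hq => _ _ H _ _.
have nl : ~~ is_loop lr f.
  rewrite /is_loop -lt0n; apply: leq_trans (@lr_ge r hr _); rewrite cards1; lia.
have e2 : [set (i, f); (j, f)] = [set (x, f) | x in [set i; j]].
  by rewrite imsetU1 imset_set1.
have e3 : (k, f) |: [set (i, f); (j, f)] = [set (x, f) | x in k |: [set i; j]].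
  by rewrite imsetU1 e2.
rewrite e3 e2 !H // /U23_rank cards2 hij; lia.
Qed.

Lemma fill_gen (S Y : {set 'I_3 * G}) :
  (forall y, y \in Y -> exists i j, [/\ i != j, (i, y.2) \in S & (j, y.2) \in S]) ->
  rk (S :|: Y) <= rk S.
Proof.
move=> h; apply: (rk_fill Hm) => -[k f] /h [i [j [hij hi hj]]] /=.
apply: (rk_add1 Hm _ (col k f hij)).
by apply/subsetP=> x; rewrite !inE => /orP[] /eqP ->.
Qed.

Lemma fill0 (X0 X1 X2 X : {set G}) : X \subset X1 -> X \subset X2 ->
  rk (M (X0 :|: X) X1 X2) <= rk (M X0 X1 X2).
Proof.
move=> h1 h2; have -> : M (X0 :|: X) X1 X2 = M X0 X1 X2 :|: row j0 X.
  by rewrite /M /row imsetU; apply/setP=> x; rewrite !inE;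
     case: (x \in _); case: (x \in _); case: (x \in _); case: (x \in _).
apply: fill_gen => y /imsetP [f hf ->]; exists j1, j2; split => //=.
  by rewrite /M !inE; apply/orP; left; apply/orP; right; apply: imset_f; apply: (subsetP h1).
by rewrite /M !inE; apply/orP; right; apply: imset_f; apply: (subsetP h2).
Qed.

Lemma fill1 (X0 X1 X2 X : {set G}) : X \subset X0 -> X \subset X2 ->
  rk (M X0 (X1 :|: X) X2) <= rk (M X0 X1 X2).
Proof.
move=> h1 h2; have -> : M X0 (X1 :|: X) X2 = M X0 X1 X2 :|: row j1 X.
  by rewrite /M /row imsetU; apply/setP=> x; rewrite !inE;
     case: (x \in _); case: (x \in _); case: (x \in _); case: (x \in _).
apply: fill_gen => y /imsetP [f hf ->]; exists j0, j2; split => //=.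
  by rewrite /M !inE; apply/orP; left; apply/orP; left; apply: imset_f; apply: (subsetP h1).
by rewrite /M !inE; apply/orP; right; apply: imset_f; apply: (subsetP h2).
Qed.

Lemma fill2 (X0 X1 X2 X : {set G}) : X \subset X0 -> X \subset X1 ->
  rk (M X0 X1 (X2 :|: X)) <= rk (M X0 X1 X2).
Proof.
move=> h1 h2; have -> : M X0 X1 (X2 :|: X) = M X0 X1 X2 :|: row j2 X.
  by rewrite /M /row imsetU; apply/setP=> x; rewrite !inE;
     case: (x \in _); case: (x \in _); case: (x \in _); case: (x \in _).
apply: fill_gen => y /imsetP [f hf ->]; exists j0, j1; split => //=.
  by rewrite /M !inE; apply/orP; left; apply/orP; left; apply: imset_f; apply: (subsetP h1).
by rewrite /M !inE; apply/orP; left; apply/orP; right; apply: imset_f; apply: (subsetP h2).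
Qed.

Lemma setT_M : setT = M setT setT setT.
Proof.
apply/eqP; rewrite eqEsubset subsetT andbT; apply/subsetP => -[a f] _.
rewrite /M /row !inE.
case: a => [[|[|[|n]]] Ha] //.
- have -> : Ordinal Ha = j0 by apply: val_inj.
  by rewrite imset_f ?inE.
- have -> : Ordinal Ha = j1 by apply: val_inj.
  by rewrite imset_f ?inE ?orbT.
- have -> : Ordinal Ha = j2 by apply: val_inj.
  by rewrite imset_f ?inE ?orbT.
Qed.

Hypothesis Hbig : 2 * r <= rk setT.

Lemma big02 : 2 * r <= rk (M setT set0 setT).
Proof.
apply: leq_trans Hbig _; rewrite setT_M.
have := @fill1 setT set0 setT setT (subxx _) (subxx _); rewrite set0U; apply.
Qed.

Lemma big01 : 2 * r <= rk (M setT setT set0).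
Proof.
apply: leq_trans Hbig _; rewrite setT_M.
have := @fill2 setT setT set0 setT (subxx _) (subxx _); rewrite set0U; apply.
Qed.

Lemma lb02 (X Y : {set G}) : lr X + lr Y <= rk (M X set0 Y).
Proof.
have h1 := rk_sub' Hm (@MS set0 set0 Y setT set0 Y (sub0set _) (subxx _) (subxx _))
                      (@MS set0 set0 Y set0 set0 setT (subxx _) (subxx _) (subsetT _)).
have h2 := rk_sub' Hm (@MS X set0 set0 X set0 Y (subxx _) (subxx _) (sub0set _))
                      (@MS X set0 set0 setT set0 set0 (subsetT _) (subxx _) (subxx _)).
rewrite MU ?setU0 ?set0U ?setUT M0rk in h2.
rewrite MU ?setU0 ?set0U ?setUT M2rk in h1.
rewrite M2rk in h1; rewrite M0rk in h2.
have := lr_le_r setT; have := big02.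
lia.
Qed.

Lemma lb01 (X Y : {set G}) : lr X + lr Y <= rk (M X Y set0).
Proof.
have h1 := rk_sub' Hm (@MS set0 Y set0 setT Y set0 (sub0set _) (subxx _) (subxx _))
                      (@MS set0 Y set0 set0 setT set0 (subxx _) (subsetT _) (subxx _)).
have h2 := rk_sub' Hm (@MS X set0 set0 X Y set0 (subxx _) (sub0set _) (subxx _))
                      (@MS X set0 set0 setT set0 set0 (subsetT _) (subxx _) (subxx _)).
rewrite MU ?setU0 ?set0U ?setUT M1rk in h1.
rewrite MU ?setU0 ?set0U ?setUT M0rk in h2.
rewrite M1rk in h1; rewrite M0rk in h2.
have := lr_le_r setT; have := big01.
lia.
Qed.
End Q.

Section Main.
Variable r : nat.
Hypothesis hr : 4 <= r.
Local Notation G := (lind_ground r).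
Local Notation lr := (lind_rank (r := r)).
Local Notation bl := (lind_block r).
Local Notation a := (bl k0).
Local Notation b := (bl k1).
Local Notation c := (bl k2).
Local Notation d := (bl k3).
Local Notation h := (a :|: b).
Variable rk : {set 'I_3 * G} -> nat.
Hypothesis Hq : quasi_product U23_rank lr rk.
Hypothesis Hbig : 2 * r <= rk setT.
Local Notation M := (M (r := r)).

Lemma Mub02 (X0 X2 : {set G}) : rk (M X0 set0 X2) <= lr X0 + lr X2.
Proof.
have := rk_U (Hm Hq) (M X0 set0 set0) (M set0 set0 X2).
by rewrite MU ?setU0 ?set0U (M0rk Hq) (M2rk Hq).
Qed.
Lemma Mub12 (X1 X2 : {set G}) : rk (M set0 X1 X2) <= lr X1 + lr X2.
Proof.
have := rk_U (Hm Hq) (M set0 X1 set0) (M set0 set0 X2).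
by rewrite MU ?setU0 ?set0U (M1rk Hq) (M2rk Hq).
Qed.

Lemma Zbound (x : {set G}) : x \subset h -> lr (x :|: c) <= r - 1 ->
  lr (x :|: d) <= r - 1 -> r - 2 <= lr x -> rk (M c (x :|: d) h) <= 2 * r - 1.
Proof.
move=> xh hc hd hx.
have hS : rk (M (x :|: c) x h) <= 2 * r - 2.
  have := @fill1 r hr rk Hq (x :|: c) set0 h x (subsetUl _ _) xh; rewrite set0U.
  have := Mub02 (x :|: c) h; have := lr_ab hr; lia.
have hT : rk (M x (x :|: d) h) <= 2 * r - 2.
  have := @fill0 r hr rk Hq set0 (x :|: d) h x (subsetUl _ _) xh; rewrite set0U.
  have := Mub12 (x :|: d) h; have := lr_ab hr; lia.
have hC := lb02 hr Hq Hbig x h.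
have := rk_sub' (Hm Hq) (@MS r x set0 h (x :|: c) x h (subsetUl _ _) (sub0set _) (subxx _))
                         (@MS r x set0 h x (x :|: d) h (subxx _) (sub0set _) (subxx _)).
rewrite MU.
have : rk (M c (x :|: d) h) <= rk (M ((x :|: c) :|: x) (x :|: (x :|: d)) (h :|: h)).
  by apply: (rk_mono (Hm Hq)); apply: MS; rewrite ?subsetUr //;
     apply/subsetP => y; rewrite !inE => ->; rewrite ?orbT.
have := lr_h hr; lia.
Qed.

Lemma contra : False.
Proof.
have hZ := @Zbound a (subsetUl _ _) (lr_ac hr) (lr_ad hr) (lr_a hr).
have hZ' := @Zbound b (subsetUr _ _) (lr_bc hr) (lr_bd hr) (lr_b hr).
have hsub : forall x : {set G}, d \subset x :|: d by move=> x; apply: subsetUr.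
have := rk_sub' (Hm Hq) (@MS r c d h c (a :|: d) h (subxx _) (hsub _) (subxx _))
                         (@MS r c d h c (b :|: d) h (subxx _) (hsub _) (subxx _)).
rewrite MU !setUid.
have hU : 2 * r <= rk (M c ((a :|: d) :|: (b :|: d)) h).
  have hh : h \subset (a :|: d) :|: (b :|: d).
    by apply/subsetP => y; rewrite !inE => /orP [] ->; rewrite ?orbT.
  have := @fill0 r hr rk Hq c ((a :|: d) :|: (b :|: d)) h h hh (subxx _).
  have := lb01 hr Hq Hbig (c :|: h) ((a :|: d) :|: (b :|: d)).
  have : rk (M (c :|: h) ((a :|: d) :|: (b :|: d)) set0) <= rk (M (c :|: h) ((a :|: d) :|: (b :|: d)) h).
    by apply: (rk_mono (Hm Hq)); apply: MS; rewrite ?sub0set.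
  have := lr_ch hr; have := lr_adbd hr; lia.
have hQ : 2 * r - 1 <= rk (M c d h).
  have := rk_sub' (Hm Hq) (@MS r set0 set0 h c d h (sub0set _) (sub0set _) (subxx _))
                           (@MS r set0 set0 h set0 set0 setT (subxx _) (subxx _) (subsetT _)).
  rewrite MU !setU0 setUT (M2rk Hq) (M2rk Hq).
  have := @fill0 r hr rk Hq c d setT d (subxx _) (subsetT _).
  have := lb02 hr Hq Hbig (c :|: d) setT.
  have : rk (M (c :|: d) set0 setT) <= rk (M (c :|: d) d setT).
    by apply: (rk_mono (Hm Hq)); apply: MS; rewrite ?sub0set.
  have := lr_cd hr; have := lr_T hr; have := lr_h hr; have := lr_le_r hr setT; lia.
lia.
Qed.
End Main.

Theorem proposition2p9 (r : nat) (hr : 4 <= r) :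
  (forall rkP : {set ('I_3 * lind_ground r)} -> nat,
     quasi_product U23_rank (lind_rank (r := r)) rkP -> rkP setT <= 2 * r - 1)
  /\ ~ (exists rkP : {set ('I_3 * lind_ground r)} -> nat,
          tensor_product U23_rank (lind_rank (r := r)) rkP).
Proof.
have P1 : forall rkP : {set ('I_3 * lind_ground r)} -> nat,
     quasi_product U23_rank (lind_rank (r := r)) rkP -> rkP setT <= 2 * r - 1.
  move=> rkP Hq; rewrite leqNgt; apply/negP => H.
  have Hbig : 2 * r <= rkP setT by lia.
  exact: (contra hr Hq Hbig).
split => //; case=> rkP [Hq He].
have := P1 rkP Hq; rewrite He /U23_rank cardsT card_ord.
have := lr_T hr; have := @lr_le_r r hr setT; lia.
Qed.
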